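(* Let $F : L_n \to \Delta K$ be a non-degenerate $2$-filtration, fix a dimension $q$, and fix grades $d,h\in L_n$ with $(1,1)\le d$ and $d\le h-(1,1)$. Set $a=d-(1,1)$, $b=d-(1,0)$, $c=d-(0,1)$, $e=h-(1,1)$, $f=h-(1,0)$, $g=h-(0,1)$. If $adeh=1$, then \[\mathsf{Dgm}_q F[d,h]=B\cdot D,\qquad B=1-abeh-aceh,\quad D=1-adef-adeg.\]
   Context: $K$ is a finite simplicial complex, coefficients in a field. $P_n=\{0<\dots<n\}$, $L_n=P_n\times P_n$ with product order, $\bot=(0,0)$, $\top=(n,n)$. $\mathsf{Int}\,L_n=\{[x,y]:x\le y\}$ with $[x,y]\le[z,w]$ iff $x\le z$, $y\le w$. A $2$-filtration is a monotone map $F$ from $L_n$ to subcomplexes of $K$ (ordered by inclusion) with $F(\bot)=\emptyset$, $F(\top)=K$. Birth–death function: $ZB_qF[x,y]=\dim(Z_qF(x)\cap B_qF(y))$ for $y\ne\top$ and $\dim Z_qF(x)$ for $y=\top$, where $Z_q,B_q$ denote $q$-cycles and $q$-boundaries. $\mathsf{Dgm}_qF$ is the unique function on $\mathsf{Int}\,L_n$ with $ZB_qF[z,w]=\sum_{[x,y]\le[z,w]}\mathsf{Dgm}_qF[x,y]$. For a simplex $\sigma$, the minimal elements of the upset $\{x:\sigma\in F(x)\}$ are its lower corners; $F$ is non-degenerate if any two distinct lower corners differ in both coordinates. Notation: for $x\le y$, $xy:=ZB_qF[x,y]$; for $w\le x\le y\le z$, $wxyz:=xz-xy-wz+wy$ (the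 1-parameter Möbius inversion value of the interval $[x,z]$ in the filtration $F(w)\subseteq F(x)\subseteq F(y)\subseteq F(z)$). *)

(* Defs.v *)
From HB Require Import structures.
From mathcomp Require Import all_boot all_order all_algebra.
From Stdlib Require Import ClassicalEpsilon.
Set Implicit Arguments. Unset Strict Implicit. Unset Printing Implicit Defensive.
Import Order.TTheory GRing.Theory Num.Theory.
Local Open Scope ring_scope.

Definition is_complex (V : finType) (X : {set {set V}}) : Prop :=
  forall s, s \in X -> s != set0 /\ (forall t : {set V}, t \subset s -> t != set0 -> t \in X).

Definition simplices (V : finType) (q : nat) (X : {set {set V}}) : {set {set V}} :=
  [set s in X | #|s| == q.+1].

(* Chains with coefficients in the field k: functions on all vertex sets;
   a chain "lives on" X when supported on simplices of X. *)
Definition chain (k : fieldType) (V : finType) := {ffun {set V} -> k^o}.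

Definition elem_chain (k : fieldType) (V : finType) (s : {set V}) : chain k V :=
  [ffun t => (t == s)%:R].

(* vertices are ordered by enum_rank; sign of removing v from s *)
Definition rm_sign (k : fieldType) (V : finType) (s : {set V}) (v : V) : k :=
  (-1) ^+ #|[set u in s | enum_rank u < enum_rank v]%N|.

(* boundary of an oriented simplex (non-augmented: faces must be nonempty) *)
Definition bd_simplex (k : fieldType) (V : finType) (s : {set V}) : chain k V :=
  \sum_(v in s | s :\ v != set0) (rm_sign k s v : k^o) *: elem_chain k (s :\ v).

Definition bd_fun (k : fieldType) (V : finType) (c : chain k V) : chain k V :=
  \sum_(s : {set V}) c s *: bd_simplex k s.

Definition bd (k : fieldType) (V : finType) : 'End(chain k V) := linfun (@bd_fun k V).

Definition chains_on (k : fieldType) (V : finType) (S : {set {set V}}) : {vspace chain k V} :=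
  <<[seq elem_chain k s | s <- enum S]>>%VS.

Definition Zq (k : fieldType) (V : finType) (q : nat) (X : {set {set V}}) : {vspace chain k V} :=
  (chains_on k (simplices q X) :&: lker (bd k V))%VS.

Definition Bq (k : fieldType) (V : finType) (q : nat) (X : {set {set V}}) : {vspace chain k V} :=
  <<[seq bd_simplex k s | s <- enum (simplices q.+1 X)]>>%VS.

Definition grade := (nat * nat)%type.
Definition inL (n : nat) (x : grade) : bool := (x.1 <= n)%N && (x.2 <= n)%N.
Definition gle (x y : grade) : bool := (x.1 <= y.1)%N && (x.2 <= y.2)%N.

Definition is_2filtration (V : finType) (n : nat) (K : {set {set V}})
    (F : grade -> {set {set V}}) : Prop :=
  is_complex K /\
  (forall x, inL n x -> is_complex (F x) /\ F x \subset K) /\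
  (forall x y, inL n x -> inL n y -> gle x y -> F x \subset F y) /\
  F (0, 0)%N = set0 /\ F (n, n) = K.

Definition lower_corner (V : finType) (n : nat) (F : grade -> {set {set V}})
    (s : {set V}) (x : grade) : Prop :=
  inL n x /\ s \in F x /\
  (forall y, inL n y -> gle y x -> s \in F y -> y = x).

Definition non_degenerate (V : finType) (n : nat) (F : grade -> {set {set V}}) : Prop :=
  forall s x y, lower_corner n F s x -> lower_corner n F s y -> x <> y ->
    x.1 <> y.1 /\ x.2 <> y.2.

Definition ZB (k : fieldType) (V : finType) (n q : nat) (F : grade -> {set {set V}})
    (x y : grade) : nat :=
  if y == (n, n) then \dim (Zq k q (F x))
  else \dim (Zq k q (F x) :&: Bq k q (F y))%VS.

Definition sum_below (n : nat) (D : grade -> grade -> int) (z w : grade) : int :=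
  \sum_(x1 < n.+1) \sum_(x2 < n.+1) \sum_(y1 < n.+1) \sum_(y2 < n.+1)
     (if gle (x1 : nat, x2 : nat) (y1 : nat, y2 : nat)
         && gle (x1 : nat, x2 : nat) z && gle (y1 : nat, y2 : nat) w
      then D (x1 : nat, x2 : nat) (y1 : nat, y2 : nat) else 0).

Definition is_Dgm (k : fieldType) (V : finType) (n q : nat) (F : grade -> {set {set V}})
    (D : grade -> grade -> int) : Prop :=
  forall z w, inL n z -> inL n w -> gle z w ->
    (ZB k n q F z w)%:Z = sum_below n D z w.

(* Dgm_q F : the (unique) function satisfying the Moebius-inversion identity *)
Definition Dgm (k : fieldType) (V : finType) (n q : nat) (F : grade -> {set {set V}}) :
    grade -> grade -> int :=
  epsilon (inhabits (fun _ _ => 0)) (is_Dgm k n q F).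

(* wxyz := xz - xy - wz + wy  with  xy := ZB_q F [x,y] *)
Definition quad (k : fieldType) (V : finType) (n q : nat) (F : grade -> {set {set V}})
    (w x y z : grade) : int :=
  (ZB k n q F x z)%:Z - (ZB k n q F x y)%:Z - (ZB k n q F w z)%:Z + (ZB k n q F w y)%:Z.

(* Main.v *)
Require Import Defs.
From HB Require Import structures.
From mathcomp Require Import all_boot all_order all_algebra.
From mathcomp Require Import zify ring.
From Stdlib Require Import ClassicalEpsilon.
Import GRing.Theory Num.Theory.
Local Open Scope ring_scope.


Lemma key01 (K : fieldType) (vT : vectType K) (X0 X Y0 Y U : {vspace vT}) :
  (X0 <= X)%VS -> (X <= U)%VS -> (Y0 <= Y)%VS -> (Y <= U)%VS ->
  \dim U = (\dim (X0 + Y0)).+1 ->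
  \dim (X + Y) = (\dim (X0 + Y0) + ((\dim (X + Y0) != \dim (X0 + Y0))
        || (\dim (X0 + Y) != \dim (X0 + Y0))))%N.
Proof.
move=> sX sXU sY sYU dU.
have sXYU : (X + Y <= U)%VS by rewrite subv_add sXU sYU.
have d1 := dimvS sXYU.
have d2 := dimvS (addvS sX sY).
have d3 := dimvS (addvS sX (subvv Y0)).
have d4 := dimvS (addvS (subvv X0) sY).
have d5 := dimvS (addvS (subvv X) sY).
have d6 := dimvS (addvS sX (subvv Y)).
case: eqP => [E1|N1] /=; last by lia.
case: eqP => [E2|N2] /=; last by lia.
have HX : (X <= X0 + Y0)%VS.
  have /eqP -> : (X0 + Y0)%VS == (X + Y0)%VS.
    by rewrite eqEdim E1 leqnn andbT; exact: addvS sX (subvv _).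
  exact: addvSl.
have HY : (Y <= X0 + Y0)%VS.
  have /eqP -> : (X0 + Y0)%VS == (X0 + Y)%VS.
    by rewrite eqEdim E2 leqnn andbT; exact: addvS (subvv _) sY.
  exact: addvSr.
have d7 : (\dim (X + Y) <= \dim (X0 + Y0))%N by apply: dimvS; rewrite subv_add HX HY.
lia.
Qed.

Ltac gen_dims := repeat match goal with |- context [dimv ?A] => generalize (dimv A : nat); intro end.

Lemma arith1 (n n2 n3 n4 : nat) (b : bool) : (n + b + n2)%N = (n3 + n4)%N ->
  (n2%:Z) = n3%:Z + n4%:Z - n%:Z - b%:Z.
Proof. case: b => /=; lia. Qed.

Lemma orZ (p q : bool) : ((p || q : nat)%:Z) = (p : nat)%:Z + (q : nat)%:Z - (p : nat)%:Z * (q : nat)%:Z :> int.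
Proof. by case: p; case: q. Qed.

Definition NN {K : fieldType} {vT : vectType K} (Zs Bs : grade -> {vspace vT}) (x y : grade) : int :=
  (\dim (Zs x :&: Bs y))%:Z.

Lemma LA (K : fieldType) (vT : vectType K) (Zs Bs : grade -> {vspace vT}) (a b c d e f g h : grade) :
  (Zs a <= Zs b)%VS -> (Zs a <= Zs c)%VS -> (Zs b <= Zs d)%VS -> (Zs c <= Zs d)%VS ->
  (Bs e <= Bs f)%VS -> (Bs e <= Bs g)%VS -> (Bs f <= Bs h)%VS -> (Bs g <= Bs h)%VS ->
  let N := NN Zs Bs in
  N d h - N d e - N a h + N a e = 1 ->
  (N d h - N d f - N d g + N d e) - (N b h - N b f - N b g + N b e)
   - (N c h - N c f - N c g + N c e) + (N a h - N a f - N a g + N a e) =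
  (1 - (N b h - N b e - N a h + N a e) - (N c h - N c e - N a h + N a e)) *
  (1 - (N d f - N d e - N a f + N a e) - (N d g - N d e - N a g + N a e)).
Proof.
move=> ab ac bd cd ef eg fh gh N HQ.
pose U := (Zs d :&: Bs h)%VS.
pose X x := (Zs x :&: Bs h)%VS.
pose Y y := (Zs d :&: Bs y)%VS.
pose H := (X a + Y e)%VS.
pose P x := (\dim (X x + Y e) != \dim H).
pose R y := (\dim (X a + Y y) != \dim H).
have capE x y : (Zs x <= Zs d)%VS -> (Bs y <= Bs h)%VS -> (Zs x :&: Bs y)%VS = (X x :&: Y y)%VS.
  move=> sxd syh; apply/vspaceP => v; rewrite !memv_cap.
  apply/idP/idP => [/andP[vx vy]|/andP[/andP[vx _] /andP[_ vy]]]; last by rewrite vx vy.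
  by rewrite vx vy (subvP sxd _ vx) (subvP syh _ vy).
have sad : (Zs a <= Zs d)%VS by apply: subv_trans ab bd.
have seh : (Bs e <= Bs h)%VS by apply: subv_trans ef fh.
have dU : \dim U = (\dim H).+1.
  move: HQ; rewrite /N /NN (capE a e sad seh).
  have := dimv_sum_cap (X a) (Y e).
  rewrite /H /U /X /Y. gen_dims; lia.
have NE x y : (Zs a <= Zs x)%VS -> (Zs x <= Zs d)%VS -> (Bs e <= Bs y)%VS -> (Bs y <= Bs h)%VS ->
   N x y = (\dim (X x))%:Z + (\dim (Y y))%:Z - (\dim H)%:Z - (P x || R y)%:Z.
  move=> sax sxd sey syh.
  rewrite /N /NN capE //.
  have := dimv_sum_cap (X x) (Y y).
  rewrite (@key01 _ _ (X a) (X x) (Y e) (Y y) U) //.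
  - rewrite /P /R /H /=. gen_dims. move=> HH; exact: arith1 HH.
  - exact: (capvS sax (subvv _)).
  - exact: (capvS sxd (subvv _)).
  - exact: (capvS (subvv _) sey).
  - exact: (capvS (subvv _) syh).
have saa : (Zs a <= Zs a)%VS := subvv _.
have sdd : (Zs d <= Zs d)%VS := subvv _.
have see : (Bs e <= Bs e)%VS := subvv _.
have shh : (Bs h <= Bs h)%VS := subvv _.
rewrite (NE d h sad sdd seh shh) (NE d f sad sdd ef fh) (NE d g sad sdd eg gh) (NE d e sad sdd see seh).
rewrite (NE b h ab bd seh shh) (NE b f ab bd ef fh) (NE b g ab bd eg gh) (NE b e ab bd see seh).
rewrite (NE c h ac cd seh shh) (NE c f ac cd ef fh) (NE c g ac cd eg gh) (NE c e ac cd see seh).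
rewrite (NE a h saa sad seh shh) (NE a f saa sad ef fh) (NE a g saa sad eg gh) (NE a e saa sad see seh).
have YeU : (Y e <= U)%VS by exact: capvS (subvv _) seh.
have XaU : (X a <= U)%VS by exact: capvS sad (subvv _).
have Pa : P a = false by rewrite /P eqxx.
have HRe : R e = false by rewrite /R eqxx.
have Pd : P d = true.
  rewrite /P /= (addv_idPl YeU) dU eqn_leq ltnn //.
have Rh : R h = true.
  rewrite /R /= (addv_idPr XaU) dU eqn_leq ltnn //.
rewrite Pa HRe Pd Rh !orZ.
rewrite -[(false:nat)%:Z]/(0:int) -[(true:nat)%:Z]/(1:int).
ring.
Qed.


Definition Dl (g : nat -> int) (i : nat) : int := g i - (if (0 < i)%N then g (i - 1)%N else 0).

Definition D4 (g : nat -> nat -> nat -> nat -> int) (x1 x2 y1 y2 : nat) : int :=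
  Dl (fun y2 => Dl (fun y1 => Dl (fun x2 => Dl (fun x1 => g x1 x2 y1 y2) x1) x2) y1) y2.

Definition S4 (n : nat) (t : nat -> nat -> nat -> nat -> int) : int :=
  \sum_(x1 < n.+1) \sum_(x2 < n.+1) \sum_(y1 < n.+1) \sum_(y2 < n.+1) t x1 x2 y1 y2.

Lemma sum_belowE n D z w : sum_below n D z w =
  S4 n (fun x1 x2 y1 y2 => if gle (x1, x2) (y1, y2) && gle (x1, x2) z && gle (y1, y2) w
                           then D (x1, x2) (y1, y2) else 0).
Proof. by []. Qed.

Lemma S4_ext n t u : (forall x1 x2 y1 y2, t x1 x2 y1 y2 = u x1 x2 y1 y2) -> S4 n t = S4 n u.
Proof.
move=> E; rewrite /S4; apply: eq_bigr => x1 _; apply: eq_bigr => x2 _.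
apply: eq_bigr => y1 _; apply: eq_bigr => y2 _; exact: E.
Qed.

Lemma S4_sub n t u : S4 n t - S4 n u = S4 n (fun x1 x2 y1 y2 => t x1 x2 y1 y2 - u x1 x2 y1 y2).
Proof.
rewrite /S4 -sumrB; apply: eq_bigr => x1 _; rewrite -sumrB; apply: eq_bigr => x2 _.
rewrite -sumrB; apply: eq_bigr => y1 _; rewrite -sumrB; apply: eq_bigr => y2 _ //.
Qed.

Lemma S4_add n t u : S4 n t + S4 n u = S4 n (fun x1 x2 y1 y2 => t x1 x2 y1 y2 + u x1 x2 y1 y2).
Proof.
rewrite /S4 -big_split; apply: eq_bigr => x1 _; rewrite -big_split; apply: eq_bigr => x2 _.
rewrite -big_split; apply: eq_bigr => y1 _; rewrite -big_split; apply: eq_bigr => y2 _ //.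
Qed.

Lemma tele m w (g : nat -> int) : (w < m)%N ->
  \sum_(i < m) ((i <= w)%N : nat)%:Z * Dl g i = g w.
Proof.
move=> wm.
have -> : \sum_(i < m) ((i <= w)%N : nat)%:Z * Dl g i = \sum_(i < w.+1) Dl g i.
  rewrite (big_ord_widen m (Dl g) wm) [RHS]big_mkcond /=.
  by apply: eq_bigr => i _; rewrite ltnS; case: (i <= w)%N; rewrite ?mul1r ?mul0r.
elim: w wm => [|w IH] wm; first by rewrite big_ord1 /Dl /= subr0.
rewrite big_ord_recr /= IH ?(ltnW wm) // /Dl /= subn1 /=; ring.
Qed.

Lemma sum_ind m c (Hc : (c < m)%N) (F : 'I_m -> int) :
  \sum_(i < m) (((i : nat) == c) : nat)%:Z * F i = F (Ordinal Hc).
Proof.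
rewrite (bigD1 (Ordinal Hc)) //= eqxx mul1r big1 ?addr0 // => i /negbTE ne.
have -> : ((i : nat) == c) = false.
  by apply/negbTE; apply: contraFN ne => /eqP ic; apply/eqP/val_inj.
by rewrite mul0r.
Qed.

Definition NF (g : nat -> nat -> nat -> nat -> int) (z1 z2 w1 w2 x1 x2 y1 y2 : nat) : int :=
  ((y2 <= w2)%N : nat)%:Z * Dl (fun y2 => ((y1 <= w1)%N : nat)%:Z * Dl (fun y1 =>
    ((x2 <= z2)%N : nat)%:Z * Dl (fun x2 => ((x1 <= z1)%N : nat)%:Z *
      Dl (fun x1 => g x1 x2 y1 y2) x1) x2) y1) y2.

Lemma NF_eq g z1 z2 w1 w2 x1 x2 y1 y2 : NF g z1 z2 w1 w2 x1 x2 y1 y2 =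
  ((y2 <= w2)%N : nat)%:Z * (((y1 <= w1)%N : nat)%:Z * (((x2 <= z2)%N : nat)%:Z *
    (((x1 <= z1)%N : nat)%:Z * D4 g x1 x2 y1 y2))).
Proof.
rewrite /NF /D4 /Dl.
by case: (0 < y2)%N; case: (0 < y1)%N; case: (0 < x2)%N; case: (0 < x1)%N; ring.
Qed.

Lemma S4_tele n g z1 z2 w1 w2 : (z1 <= n)%N -> (z2 <= n)%N -> (w1 <= n)%N -> (w2 <= n)%N ->
  S4 n (NF g z1 z2 w1 w2) = g z1 z2 w1 w2.
Proof.
move=> G1 G2 G3 G4.
have H1 : (z1 < n.+1)%N by rewrite ltnS; exact: G1.
have H2 : (z2 < n.+1)%N by rewrite ltnS; exact: G2.
have H3 : (w1 < n.+1)%N by rewrite ltnS; exact: G3.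
have H4 : (w2 < n.+1)%N by rewrite ltnS; exact: G4.
rewrite /S4 /NF.
under eq_bigr => x1 _ do under eq_bigr => x2 _ do under eq_bigr => y1 _ do rewrite (tele _ _ _ H4).
under eq_bigr => x1 _ do under eq_bigr => x2 _ do rewrite (tele _ _ _ H3).
under eq_bigr => x1 _ do rewrite (tele _ _ _ H2).
by rewrite (tele _ _ _ H1).
Qed.

Lemma Dl_zero_all g i : (forall j, g j = 0) -> Dl g i = 0.
Proof. by move=> E; rewrite /Dl !E; case: ifP => _; rewrite subrr. Qed.

Lemma Dl_zero_le g i : (forall j, (j <= i)%N -> g j = 0) -> Dl g i = 0.
Proof.
move=> E; rewrite /Dl E //; case: ifP => _; last by rewrite subrr.
by rewrite E ?leq_subr // subrr.
Qed.

Lemma Dl_const g i : (0 < i)%N -> g i = g (i - 1)%N -> Dl g i = 0.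
Proof. by move=> Hi E; rewrite /Dl Hi E subrr. Qed.

Lemma Dl_congr2 g g' i : g i = g' i -> g (i - 1)%N = g' (i - 1)%N -> Dl g i = Dl g' i.
Proof. by move=> E1 E2; rewrite /Dl E1 E2. Qed.

Lemma D4_zero g (Hg : forall x1 x2 y1 y2, g x1 x2 y1 y2 = g (minn x1 y1) (minn x2 y2) y1 y2)
  x1 x2 y1 y2 : ~~ ((x1 <= y1) && (x2 <= y2))%N -> D4 g x1 x2 y1 y2 = 0.
Proof.
rewrite negb_and -!ltnNge => /orP[H|H]; rewrite /D4.
- apply: Dl_zero_all => y2'; apply: Dl_zero_le => y1' Hy; apply: Dl_zero_all => x2'.
  apply: Dl_const; first by lia.
  rewrite Hg [RHS]Hg; congr g; lia.
- apply: Dl_zero_le => y2' Hy; apply: Dl_zero_all => y1'; apply: Dl_const; first by lia.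
  have E : forall u, g u x2 y1' y2' = g u (x2 - 1)%N y1' y2'.
    by move=> u; rewrite Hg [RHS]Hg; congr g; lia.
  by rewrite /Dl !E.
Qed.

Definition Gz (k : fieldType) {V : finType} (n q : nat) (F : grade -> {set {set V}})
  (z1 z2 w1 w2 : nat) : int := (ZB k n q F (minn z1 w1, minn z2 w2) (w1, w2))%:Z.

Lemma one_mul (x : int) : ((true : nat)%:Z) * x = x.
Proof. exact: mul1r. Qed.
Lemma zero_mul (x : int) : ((false : nat)%:Z) * x = 0.
Proof. exact: mul0r. Qed.

Lemma Dgm_exists (k : fieldType) (V : finType) n q (F : grade -> {set {set V}}) :
  exists D, is_Dgm k n q F D.
Proof.
exists (fun x y => D4 (Gz k n q F) x.1 x.2 y.1 y.2).
move=> [z1 z2] [w1 w2]; rewrite /inL /gle /= => /andP[Hz1 Hz2] /andP[Hw1 Hw2] /andP[Hzw1 Hzw2].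
rewrite sum_belowE (@S4_ext n _ (NF (Gz k n q F) z1 z2 w1 w2)); last first.
  move=> x1 x2 y1 y2; rewrite NF_eq /=.
  case Hxy: ((x1 <= y1) && (x2 <= y2))%N.
  + rewrite /gle /= Hxy /=.
    by case: (x1 <= z1)%N; case: (x2 <= z2)%N; case: (y1 <= w1)%N; case: (y2 <= w2)%N;
      rewrite /= ?one_mul ?zero_mul.
  + rewrite /gle /= Hxy /= D4_zero ?Hxy ?mulr0 //.
    by move=> *; rewrite /Gz -!minnA !minnn.
rewrite S4_tele // /Gz (minn_idPl Hzw1) (minn_idPl Hzw2) //.
Qed.

Lemma ind_pred (x d : nat) : (0 < d)%N ->
  ((x <= d - 1)%N : nat)%:Z = ((x <= d)%N : nat)%:Z - ((x == d) : nat)%:Z :> int.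
Proof.
move=> Hd; have -> : (x <= d - 1)%N = (x < d)%N by lia.
by case: ltngtP.
Qed.

Lemma andZ (a b : bool) : ((a && b) : nat)%:Z = (a : nat)%:Z * (b : nat)%:Z :> int.
Proof. by case: a; case: b. Qed.

Lemma ifZ (b : bool) (v : int) : (if b then v else 0) = (b : nat)%:Z * v.
Proof. by case: b; rewrite ?one_mul ?zero_mul. Qed.

Lemma Dgm_unique n (D : grade -> grade -> int) (Zf : grade -> grade -> int) d1 d2 h1 h2 :
  (0 < d1)%N -> (0 < d2)%N -> (d1 < h1)%N -> (d2 < h2)%N -> (h1 <= n)%N -> (h2 <= n)%N ->
  (forall z w, inL n z -> inL n w -> gle z w -> Zf z w = sum_below n D z w) ->
  D (d1, d2) (h1, h2) = D4 (fun z1 z2 w1 w2 => Zf (z1, z2) (w1, w2)) d1 d2 h1 h2.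
Proof.
move=> Hd1 Hd2 Hdh1 Hdh2 Hh1 Hh2 HD.
have Hh1' : (0 < h1)%N by lia.
have Hh2' : (0 < h2)%N by lia.
have E : D4 (fun z1 z2 w1 w2 => sum_below n D (z1, z2) (w1, w2)) d1 d2 h1 h2 =
         D4 (fun z1 z2 w1 w2 => Zf (z1, z2) (w1, w2)) d1 d2 h1 h2.
  rewrite /D4; repeat apply: Dl_congr2; cbv beta; symmetry; apply: HD; rewrite /inL /gle /=; lia.
rewrite -E {E} /D4 /Dl; cbv beta; rewrite Hd1 Hd2 Hh1' Hh2'; cbv iota.
rewrite !sum_belowE !S4_sub.
rewrite (@S4_ext n _ (fun x1 x2 y1 y2 => ((y2 == h2) : nat)%:Z * (((y1 == h1) : nat)%:Z *
   (((x2 == d2) : nat)%:Z * (((x1 == d1) : nat)%:Z *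
   ((((x1 <= y1) && (x2 <= y2))%N : nat)%:Z * D (x1, x2) (y1, y2))))))); last first.
  move=> x1 x2 y1 y2; cbv beta.
  rewrite !ifZ /gle /= !andZ.
  rewrite (ind_pred x1 _ Hd1) (ind_pred x2 _ Hd2) (ind_pred y1 _ Hh1') (ind_pred y2 _ Hh2').
  ring.
have Hn1 : (h1 < n.+1)%N by rewrite ltnS.
have Hn2 : (h2 < n.+1)%N by rewrite ltnS.
have Hm1 : (d1 < n.+1)%N by rewrite ltnS; lia.
have Hm2 : (d2 < n.+1)%N by rewrite ltnS; lia.
rewrite /S4; cbv beta.
under eq_bigr => x1 _ do under eq_bigr => x2 _ do under eq_bigr => y1 _ do rewrite (@sum_ind _ _ Hn2).
under eq_bigr => x1 _ do under eq_bigr => x2 _ do rewrite (@sum_ind _ _ Hn1).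
under eq_bigr => x1 _ do rewrite (@sum_ind _ _ Hm2).
rewrite (@sum_ind _ _ Hm1) /= (ltnW Hdh1) (ltnW Hdh2) /=.
by rewrite one_mul.
Qed.


Lemma chains_on_mono (k : fieldType) (V : finType) (S S' : {set {set V}}) :
  S \subset S' -> (chains_on k S <= chains_on k S')%VS.
Proof.
move=> sS; apply: sub_span => v /mapP[s]; rewrite mem_enum => sS1 ->.
by apply: map_f; rewrite mem_enum; exact: (subsetP sS).
Qed.

Lemma simplices_mono (V : finType) q (X Y : {set {set V}}) :
  X \subset Y -> simplices q X \subset simplices q Y.
Proof.
move=> sXY; apply/subsetP => s; rewrite !inE => /andP[sX ->].
by rewrite (subsetP sXY).
Qed.

Lemma Zq_mono (k : fieldType) (V : finType) q (X Y : {set {set V}}) :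
  X \subset Y -> (Zq k q X <= Zq k q Y)%VS.
Proof.
move=> sXY; apply: capvS; [apply: chains_on_mono; exact: simplices_mono | exact: subvv].
Qed.

Lemma Bq_mono (k : fieldType) (V : finType) q (X Y : {set {set V}}) :
  X \subset Y -> (Bq k q X <= Bq k q Y)%VS.
Proof.
move=> sXY; apply: sub_span => v /mapP[s]; rewrite mem_enum => sS1 ->.
by apply: map_f; rewrite mem_enum; apply: (subsetP (simplices_mono _ q.+1 _ _ sXY)).
Qed.

Theorem mainTheorem2 (k : fieldType) (V : finType) (n q : nat)
    (K : {set {set V}}) (F : grade -> {set {set V}}) (d h : grade) :
  is_2filtration n K F -> non_degenerate n F ->
  inL n h -> gle (1, 1)%N d -> gle d (h.1 - 1, h.2 - 1)%N ->
  let a := (d.1 - 1, d.2 - 1)%N in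
  let b := (d.1 - 1, d.2)%N in
  let c := (d.1, d.2 - 1)%N in
  let e := (h.1 - 1, h.2 - 1)%N in
  let f := (h.1 - 1, h.2)%N in
  let g := (h.1, h.2 - 1)%N in
  quad k n q F a d e h = 1 ->
  Dgm k n q F d h =
    (1 - quad k n q F a b e h - quad k n q F a c e h) *
    (1 - quad k n q F a d e f - quad k n q F a d e g).
Proof.
case: d => d1 d2; case: h => h1 h2.
move=> HF _ Hh Hd Hdh; cbv zeta beta iota delta [fst snd] => HQ.
move: Hh Hd Hdh; rewrite /inL /gle /= => /andP[Hh1 Hh2] /andP[Hd1 Hd2] /andP[Hdh1 Hdh2].
have HDg : is_Dgm k n q F (Dgm k n q F).
  by rewrite /Dgm; apply: epsilon_spec; exact: Dgm_exists.
have Hdh1' : (d1 < h1)%N by clear -Hdh1 Hd1 Hh1; lia.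
have Hdh2' : (d2 < h2)%N by clear -Hdh2 Hd2 Hh2; lia.
have Hh1' : (0 < h1)%N by clear -Hdh1'; lia.
have Hh2' : (0 < h2)%N by clear -Hdh2'; lia.
rewrite (@Dgm_unique n _ (fun z w => (ZB k n q F z w)%:Z) d1 d2 h1 h2 Hd1 Hd2 Hdh1' Hdh2' Hh1 Hh2 HDg).
rewrite /D4 /Dl; cbv beta; rewrite Hd1 Hd2 Hh1' Hh2'; cbv iota.
pose Zs := fun x : grade => Zq k q (F x).
pose Bs := fun y : grade => if y == (n, n) then fullv else Bq k q (F y).
have ZBE : forall x y, (ZB k n q F x y)%:Z = NN Zs Bs x y.
  by move=> x y; rewrite /ZB /NN /Bs /Zs; case: ifP => _ //; rewrite capvf.
case: HF => _ [_ [Fmono _]].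
have Zmono : forall x y, inL n x -> inL n y -> gle x y -> (Zs x <= Zs y)%VS.
  by move=> x y Hx Hy Hxy; apply: Zq_mono; apply: Fmono.
have Bmono : forall x y, inL n x -> inL n y -> gle x y -> x != (n, n) -> (Bs x <= Bs y)%VS.
  move=> x y Hx Hy Hxy Hxn; rewrite /Bs (negbTE Hxn); case: ifP => _; first exact: subvf.
  by apply: Bq_mono; apply: Fmono.
move: HQ; rewrite /quad !ZBE => HQ.
have H := @LA _ _ Zs Bs ((d1 - 1)%N, (d2 - 1)%N) ((d1 - 1)%N, d2) (d1, (d2 - 1)%N) (d1, d2)
   ((h1 - 1)%N, (h2 - 1)%N) ((h1 - 1)%N, h2) (h1, (h2 - 1)%N) (h1, h2).
cbv zeta in H.
apply: etrans (H _ _ _ _ _ _ _ _ HQ); last first.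
all: try (apply: Zmono; rewrite /inL /gle /=; clear -Hh1 Hh2 Hd1 Hd2 Hdh1 Hdh2; lia).
all: try (apply: Bmono; rewrite /inL /gle /= ?xpair_eqE; clear -Hh1 Hh2 Hd1 Hd2 Hdh1 Hdh2; lia).
ring.
Qed.
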